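(* Let $a<b$ be real numbers and let $h,g:[a,b)\to\mathbb{R}$ be continuous functions such that $h$ is increasing and is not constant on any neighborhood of $a$. For $x\in(a,b)$ let $\mu(x)$ be the supremum of the set of numbers $\tau\in(a,x]$ that are points of local extremum of the function $$t\mapsto \bigl(g(x)-g(a)\bigr)h(t)-\bigl(h(x)-h(a)\bigr)g(t),\qquad t\in[a,b).$$ Suppose that the limit $\lim_{x\to a}\frac{g(x)-g(a)}{h(x)-h(a)}$ exists and is finite. Then $$\varlimsup_{x\to a}\frac{h(\mu(x))-h(a)}{h(x)-h(a)}\ \geq\ \frac1e.$$
   Context: Limits at $a$ are right-hand limits. *)

(* Defs.v *)
From HB Require Import structures.
From mathcomp Require Import all_boot all_order all_algebra.
From mathcomp Require Import all_classical all_reals all_analysis.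
Set Implicit Arguments. Unset Strict Implicit. Unset Printing Implicit Defensive.
Import Order.TTheory GRing.Theory Num.Theory.
Import numFieldNormedType.Exports.
Local Open Scope classical_set_scope.
Local Open Scope ring_scope.

Definition local_extremum {R : realType} (D : set R) (F : R -> R) (t : R) : Prop :=
  D t /\
  ((exists2 e : R, 0 < e & forall s, D s -> `|s - t| < e -> F s <= F t) \/
   (exists2 e : R, 0 < e & forall s, D s -> `|s - t| < e -> F t <= F s)).

Definition auxF {R : realType} (a : R) (h g : R -> R) (x : R) : R -> R :=
  fun t => (g x - g a) * h t - (h x - h a) * g t.

Definition mu {R : realType} (a b : R) (h g : R -> R) (x : R) : R :=
  sup [set tau | a < tau <= x /\ local_extremum `[a, b[ (auxF a h g x) tau].

(* Main.v *)
Require Import Defs.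
From HB Require Import structures.
From mathcomp Require Import all_boot all_order all_algebra.
From mathcomp Require Import ring lra zify.
From mathcomp Require Import all_classical all_reals all_analysis.

Set Implicit Arguments. Unset Strict Implicit. Unset Printing Implicit Defensive.
Import Order.TTheory GRing.Theory Num.Theory.
Import numFieldNormedType.Exports.
Local Open Scope classical_set_scope.
Local Open Scope ring_scope.
Definition Btw {R : realType} (A B : R) := (0 < B < A) \/ (A < B < 0).
Lemma sum_lb (R : realType) (rho : nat -> R) (mu : R) i n :
  (forall m, (i <= m < i + n)%N -> mu <= rho m - rho m.+1) ->
  n%:R * mu <= rho i - rho (i + n)%N.
Proof.
elim: n => [|n IH] H; first by rewrite addn0 mul0r subrr.
have H1 : n%:R * mu <= rho i - rho (i + n)%N.
  by apply: IH => m /andP[h1 h2]; apply: H; rewrite h1 /=; lia.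
have H2 : mu <= rho (i + n)%N - rho (i + n).+1.
  by apply: H; lia.
rewrite addnS -addn1 natrD; lra.
Qed.

Lemma discrete_pos (R : realType) (rho : nat -> R) (r B : R) (M : nat) :
  (0 < M)%N -> 0 < r -> r * M.+1%:R <= M%:R ->
  (forall i j, (i < j <= i + M)%N -> Btw (r * (rho i - rho j.+1)) (rho i - rho j)) ->
  (forall n, `|rho n| <= B) -> rho 1%N < rho 0%N -> False.
Proof.
move=> M0 r0 rM H bnd r10.
have Mpos : (0 < M%:R :> R) by rewrite ltr0n.
have r1 : r < 1.
  have : r * M.+1%:R = r * M%:R + r by rewrite -addn1 natrD; ring.
  move=> e; rewrite e in rM.
  have : r * M%:R < M%:R by lra.
  by rewrite -[X in _ < X]mul1r ltr_pM2r.
have dec : forall i, rho i.+1 < rho i.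
  elim=> [//|i IH].
  have hh : (i < i.+1 <= i + M)%N by rewrite ltnSn /=; lia.
  have := H i i.+1 hh.
  case; last lra.
  move=> /andP[h1 h2].
  have h3 : 0 < rho i - rho i.+2 by rewrite -(pmulr_rgt0 _ r0); lra.
  have : r * (rho i - rho i.+2) < rho i - rho i.+2 by rewrite -[X in _ < X]mul1r ltr_pM2r.
  lra.
have mono : forall i n, rho (i + n.+1)%N < rho i.
  move=> i; elim=> [|n IH]; first by rewrite addn1.
  by rewrite addnS; apply: lt_trans (dec _) IH.
have [mu mu0 mub] : exists2 mu, 0 < mu & forall k, (k < M)%N -> mu <= rho k - rho k.+1.
  elim: M {M0 rM H Mpos} => [|n [mu mu0 mub]]; first by exists 1.
  exists (Order.min mu (rho n - rho n.+1)).
    by rewrite lt_min mu0 subr_gt0 dec.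
  move=> k; rewrite ltnS leq_eqVlt => /orP[/eqP->|kn].
    by rewrite ge_min lexx orbT.
  by rewrite ge_min mub.
have all_mu : forall k, mu <= rho k - rho k.+1.
  elim/ltn_ind => k IH.
  case: (ltnP k M) => kM; first exact: mub.
  pose i := (k - M)%N.
  have ki : k = (i + M)%N by rewrite /i subnK.
  have hh : (i < k <= i + M)%N by rewrite ki; lia.
  have := H i k hh.
  have sl := @sum_lb R rho mu i M.
  rewrite -ki in sl.
  have {}sl : M%:R * mu <= rho i - rho k.
    apply: sl => m /andP[_ mk]; apply: IH; done.
  case; last first.
    move=> /andP[_ h]; have : 0 < M%:R * mu by rewrite mulr_gt0.
    lra.
  move=> /andP[_ h].
  have e1 : (1 - r) * (rho i - rho k) < r * (rho k - rho k.+1) by lra.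
  have e2 : (1 - r) * (M%:R * mu) <= (1 - r) * (rho i - rho k).
    by rewrite ler_wpM2l // subr_ge0 ltW.
  have e3 : r * mu <= (1 - r) * (M%:R * mu).
    have : r * M.+1%:R = r * M%:R + r by rewrite -addn1 natrD; ring.
    move=> e; rewrite e in rM.
    have : r <= (1 - r) * M%:R by lra.
    move=> hr; rewrite mulrA; by rewrite ler_wpM2r // ltW.
  have : r * mu < r * (rho k - rho k.+1) by lra.
  by rewrite ltr_pM2l // => /ltW.
pose n := (Num.truncn (2 * B / mu)).+1.
have := @sum_lb R rho mu 0 n (fun m _ => all_mu m).
rewrite add0n.
have hn : 2 * B / mu < n%:R by apply: truncnS_gt.
have : 2 * B < n%:R * mu by rewrite -ltr_pdivrMr.
have b0 := bnd 0%N; have bn := bnd n.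
move: b0 bn; rewrite !ler_norml.
lra.
Qed.
Lemma choose_M (R : realType) (q : R) : q < (expR 1)^-1 ->
  exists M, (0 < M)%N /\ q <= (M%:R / M.+1%:R)^+M.+1.
Proof.
move=> hq.
have e0 : 0 < expR 1 :> R := expR_gt0 1.
have qe : q * expR 1 < 1 by rewrite -ltr_pdivlMr // div1r.
pose eps := 1 - q * expR 1.
have eps0 : 0 < eps by rewrite /eps subr_gt0.
pose M := (Num.truncn (eps^-1)).+1.
have hM : eps^-1 < M%:R by apply: truncnS_gt.
have M0 : (0 < M)%N by [].
have Mr0 : 0 < M%:R :> R by rewrite ltr0n.
have Meps : 1 < M%:R * eps by rewrite -ltr_pdivrMr // div1r.
exists M; split => //.
pose z := 1 + (M%:R)^-1 : R.
pose y := M%:R / M.+1%:R : R.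
have Mi0 : 0 < (M%:R)^-1 :> R by rewrite invr_gt0.
have z0 : 0 < z by rewrite /z; lra.
have yz : y * z = 1.
  rewrite /y /z -natr1; field.
  by apply/andP; split; apply/eqP; lra.

have zM : z ^+ M <= expR 1.
  have h1 : z <= expR (M%:R^-1) by rewrite /z; apply: expR_ge1Dx.
  apply: (@le_trans _ _ (expR (M%:R^-1) ^+ M)).
    by apply: lerXn2r => //; rewrite nnegrE ?ltW ?expR_gt0.
  by rewrite -expRM_natl mulfV // gt_eqF.
have zM1 : z ^+ M.+1 <= expR 1 * z.
  by rewrite exprS mulrC ler_wpM2r // ltW.
have yM : (y * z) ^+ M.+1 = 1 by rewrite yz expr1n.
rewrite exprMn in yM.
have zp : 0 < z ^+ M.+1 by rewrite exprn_gt0.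
have yp : 0 <= y ^+ M.+1 by rewrite exprn_ge0 // /y divr_ge0.
have y1 : y ^+ M.+1 * (expR 1 * z) >= 1.
  by rewrite -[X in X <= _]yM ler_wpM2l.
have qy : q * expR 1 <= y.
  rewrite /y ler_pdivlMr ?ltr0n // -natr1.
  rewrite /eps in Meps. nra.
have : q * expR 1 * z <= 1 by rewrite -[X in _ <= X]yz ler_wpM2r // ltW.
nra.
Qed.
Lemma loc_ext_of (R : realType) (D : set R) (F : R -> R) u v c :
  u < c < v -> (forall s, u < s < v -> D s) ->
  ((forall t, t \in `[u, v] -> F t <= F c) \/ (forall t, t \in `[u, v] -> F c <= F t)) ->
  local_extremum D F c.
Proof.
move=> /andP[uc cv] Ds Hc; split; first by apply: Ds; rewrite uc cv.
have e0 : 0 < Order.min (c - u) (v - c) by rewrite lt_min !subr_gt0 uc cv.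
have inI : forall s, `|s - c| < Order.min (c - u) (v - c) -> s \in `[u, v].
  move=> s; rewrite lt_min !ltr_norml => /andP[/andP[h1 h2] /andP[h3 h4]].
  rewrite in_itv /=; apply/andP; split; lra.
case: Hc => Hc; [left|right]; exists (Order.min (c - u) (v - c)) => // s _ hs;
  exact: Hc (inI _ hs).
Qed.

Lemma between_noext (R : realType) (D : set R) (F : R -> R) u v w :
  u < w < v -> {within `[u, v], continuous F} ->
  (forall s, u < s < v -> D s) ->
  (forall c, u < c < v -> ~ local_extremum D F c) ->
  Btw (F u - F v) (F w - F v).
Proof.
move=> /andP[uw wv] cF Ds noext.
have uv : u <= v by apply: ltW; apply: lt_trans uw wv.
have [cM cMI HM] := EVT_max uv cF.
have [cm cmI Hm] := EVT_min uv cF.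
have wI : w \in `[u, v] by rewrite in_itv /= !ltW.
have endp : forall c, c \in `[u, v] -> ~ (u < c < v) -> c = u \/ c = v.
  move=> c; rewrite in_itv /= => /andP[h1 h2] h3.
  case: (ltgtP u c) => [uc|cu|<-]; last by left.
  - case: (ltgtP c v) => [cv'|vc|->]; last by right.
    + by exfalso; apply: h3; rewrite uc cv'.
    + by exfalso; move: h2; rewrite leNgt vc.
  - by exfalso; move: h1; rewrite leNgt cu.
have mx : forall t, t \in `[u, v] -> F t <= Order.max (F u) (F v).
  move=> t tI; apply: le_trans (HM t tI) _.
  have [c_in|c_out] := boolP (u < cM < v).
    by exfalso; apply: (noext cM c_in); apply: loc_ext_of c_in Ds _; left.
  have [->|->] := endp cM cMI (fun h => negP c_out h);
    by rewrite le_max lexx ?orbT.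
have mn : forall t, t \in `[u, v] -> Order.min (F u) (F v) <= F t.
  move=> t tI; apply: le_trans (Hm t tI).
  have [c_in|c_out] := boolP (u < cm < v).
    by exfalso; apply: (noext cm c_in); apply: loc_ext_of c_in Ds _; right.
  have [->|->] := endp cm cmI (fun h => negP c_out h);
    by rewrite ge_min lexx ?orbT.
have wuv : u < w < v by rewrite uw wv.
have lt1 : F w < Order.max (F u) (F v).
  rewrite ltNge; apply/negP => h; apply: (noext w wuv).
  apply: loc_ext_of wuv Ds _; left => t tI; exact: le_trans (mx t tI) h.
have lt2 : Order.min (F u) (F v) < F w.
  rewrite ltNge; apply/negP => h; apply: (noext w wuv).
  apply: loc_ext_of wuv Ds _; right => t tI; exact: le_trans h (mn t tI).
move: lt1 lt2; rewrite /Btw lt_max gt_min => /orP[h1|h1] /orP[h2|h2].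
- lra.
- left; apply/andP; split; lra.
- right; apply/andP; split; lra.
- lra.
Qed.

Lemma Btw_opp (R : realType) (A B : R) : Btw A B -> Btw (- A) (- B).
Proof. by rewrite /Btw => -[/andP[h1 h2]|/andP[h1 h2]]; [right|left]; apply/andP; split; lra. Qed.

Lemma Btw_scale (R : realType) (c A B : R) : 0 < c -> Btw (c * A) (c * B) -> Btw A B.
Proof.
move=> c0; rewrite /Btw => -[/andP[h1 h2]|/andP[h1 h2]]; [left|right]; apply/andP; split.
- by rewrite -(pmulr_rgt0 _ c0).
- by rewrite -(ltr_pM2l c0).
- by rewrite -(ltr_pM2l c0).
- by rewrite -(pmulr_rlt0 _ c0).
Qed.

Lemma discrete (R : realType) (rho : nat -> R) (r B : R) (M : nat) :
  (0 < M)%N -> 0 < r -> r * M.+1%:R <= M%:R ->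
  (forall i j, (i < j <= i + M)%N -> Btw (r * (rho i - rho j.+1)) (rho i - rho j)) ->
  (forall n, `|rho n| <= B) -> False.
Proof.
move=> M0 r0 rM H bnd.
have h01 : (0 < 1 <= 0 + M)%N by rewrite add0n.
have := H 0%N 1%N h01; rewrite /Btw.
case: (ltgtP (rho 1%N) (rho 0%N)) => [lt|gt|eq] hb.
- exact: (discrete_pos M0 r0 rM H bnd lt).
- apply: (@discrete_pos R (fun n => - rho n) r B M M0 r0 rM).
  + move=> i j hij; have := Btw_opp (H i j hij).
    have -> : - (r * (rho i - rho j.+1)) = r * (- rho i - - rho j.+1) by ring.
    by have -> : - (rho i - rho j) = - rho i - - rho j by ring.
  + by move=> n; rewrite normrN.
  + by rewrite ltrN2.
- by move: hb; rewrite eq subrr => -[/andP[]|/andP[]]; rewrite ltxx.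
Qed.

Lemma near_right_ex (R : realType) (a : R) (P : R -> Prop) :
  (\forall x \near a^'+, P x) -> exists2 d, 0 < d & forall x, a < x < a + d -> P x.
Proof.
move=> /nbhs_ballP [d d0 Hd]; exists d => // x /andP[ax xd].
apply: (Hd x) => //; rewrite /ball /= distrC ger0_norm ?subr_ge0 ?ltW //; lra.
Qed.

Lemma auxF_diff (R : realType) (a : R) (h g : R -> R) (X s : R) :
  h X - h a != 0 -> h s - h a != 0 ->
  auxF a h g X s - auxF a h g X X =
  (h X - h a) * (h s - h a) * ((g X - g a) / (h X - h a) - (g s - g a) / (h s - h a)).
Proof. by move=> hX hs; rewrite /auxF; field; rewrite hX hs. Qed.

Theorem theorem3 (R : realType) (a b : R) (h g : R -> R) :
  a < b ->
  {within `[a, b[, continuous h} ->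
  {within `[a, b[, continuous g} ->
  {in `[a, b[ &, {homo h : x y / x <= y}} ->
  (forall c, a < c <= b ->
     exists s t : R, [/\ s \in `[a, c[, t \in `[a, c[ & h s != h t]) ->
  cvg ((g x - g a) / (h x - h a) @[x --> a^'+]) ->
  (((expR 1)^-1)%:E <=
    limf_esup (fun x => ((h (mu a b h g x) - h a) / (h x - h a))%:E) a^'+)%E.
Proof.
move=> ab hc gc hmono hnc gcv.
have hmon : forall x y, x \in `[a, b[ -> y \in `[a, b[ -> x <= y -> h x <= h y.
  by move=> x y xI yI xy; apply: hmono.
have inab : forall x, a <= x -> x < b -> x \in `[a, b[.
  by move=> x h1 h2; rewrite in_itv /= h1 h2.
have Hpos : forall x, a < x -> x < b -> 0 < h x - h a.
  move=> x ax xb.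
  have axb : a < x <= b by rewrite ax ltW.
  have [s [t [sI tI hst]]] := hnc x axb.
  move: sI tI; rewrite !in_itv /= => /andP[sa sx] /andP[ta tx].
  have h1 := hmon a s (inab a (lexx a) ab) (inab s sa (lt_trans sx xb)) sa.
  have h2 := hmon s x (inab s sa (lt_trans sx xb)) (inab x (ltW ax) xb) (ltW sx).
  have h3 := hmon a t (inab a (lexx a) ab) (inab t ta (lt_trans tx xb)) ta.
  have h4 := hmon t x (inab t ta (lt_trans tx xb)) (inab x (ltW ax) xb) (ltW tx).
  rewrite subr_gt0 ltNge; apply/negP => hle.
  by move/eqP: hst; apply; lra.
rewrite leNgt; apply/negP => lt.
have [y [V Va Ey] ylt] := ereal_inf_lt lt.
have [q [qlt qV]] : exists q : R, (q < (expR 1)^-1) /\ (forall x, V x -> (h (mu a b h g x) - h a) / (h x - h a) < q).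
  move: ylt; rewrite -Ey.
  have ub : forall x, V x -> (((h (mu a b h g x) - h a) / (h x - h a))%:E <=
      ereal_sup ((fun x => ((h (mu a b h g x) - h a) / (h x - h a))%:E) @` V))%E.
    by move=> x Vx; apply: ereal_sup_ubound; exists x.
  case: (ereal_sup _) ub => [s| |] ub hs.
  - exists ((s + (expR 1)^-1) / 2); rewrite lte_fin in hs; split; first lra.
    by move=> x Vx; have := ub x Vx; rewrite lee_fin; lra.
  - by [].
  - exists 0; split; first by rewrite invr_gt0 expR_gt0.
    by move=> x Vx; have := ub x Vx; rewrite leeNy_eq.
have [d1 d10 Hd1] := near_right_ex Va.
have [d2 d20 Hd2] := near_right_ex ((cvgrPdist_lt _ _).1 gcv 1 ltr01).
pose m := Order.min (Order.min d1 d2) (b - a).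
have mpos : 0 < m by rewrite /m !lt_min d10 d20 subr_gt0 ab.
have m1 : m <= d1 by rewrite /m !ge_min lexx.
have m2 : m <= d2 by rewrite /m !ge_min lexx !orbT.
have m3 : m <= b - a by rewrite /m ge_min lexx orbT.
pose X0 := a + m / 2.
have aX0 : a < X0 by rewrite /X0; lra.
have X0b : X0 < b by rewrite /X0; lra.
have X0d1 : X0 < a + d1 by rewrite /X0; lra.
have X0d2 : X0 < a + d2 by rewrite /X0; lra.
have H0 := Hpos X0 aX0 X0b.
have [M [M0 qM]] := choose_M qlt.
pose r := M%:R / M.+1%:R : R.
have r0 : 0 < r by rewrite /r divr_gt0 // ltr0n.
have rM : r * M.+1%:R <= M%:R by rewrite /r divfK // pnatr_eq0.
have r1 : r < 1 by rewrite /r ltr_pdivrMr // mul1r ltr_nat.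
have ex : forall k : nat, exists t, t \in `[a, X0] /\ h t - h a = r ^+ k * (h X0 - h a).
  move=> k.
  have ct : {within `[a, X0], continuous h}.
    apply: continuous_subspaceW hc => x /=; rewrite !in_itv /= => /andP[h1 h2].
    by apply/andP; split => //; lra.
  have rk0 : 0 <= r ^+ k by rewrite exprn_ge0 // ltW.
  have rk1 : r ^+ k <= 1 by rewrite exprn_ile1 // ltW.
  have hv : Num.min (h a) (h X0) <= h a + r ^+ k * (h X0 - h a) <= Num.max (h a) (h X0).
    apply/andP; split.
      rewrite ge_min; apply/orP; left; nra.
    rewrite le_max; apply/orP; right; nra.
  have [c cI hcv] := @IVT R h a X0 (h a + r ^+ k * (h X0 - h a)) (ltW aX0) ct hv.
  by exists c; split => //; rewrite hcv; ring.
case: (choice ex) => P HP.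
have PI : forall k, a < P k /\ P k <= X0 /\ h (P k) - h a = r ^+ k * (h X0 - h a).
  move=> k; have [kI kH] := HP k; move: kI; rewrite in_itv /= => /andP[h1 h2].
  split; last by split.
  rewrite lt_neqAle h1 andbT; apply/negP => /eqP ea.
  have : 0 < r ^+ k * (h X0 - h a) by rewrite mulr_gt0 // exprn_gt0.
  by rewrite -kH -ea subrr ltxx.
have Pab : forall k, P k \in `[a, b[.
  move=> k; have [h1 [h2 _]] := PI k; apply: inab; [exact: ltW | lra].
have Pdec : forall i j, (i < j)%N -> P j < P i.
  move=> i j ij; rewrite ltNge; apply/negP => hle.
  have hh := hmon _ _ (Pab i) (Pab j) hle.
  have [_ [_ Hi]] := PI i; have [_ [_ Hj]] := PI j.
  have rji : r ^+ j < r ^+ i by rewrite ltr_iXn2l.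
  have : r ^+ i * (h X0 - h a) <= r ^+ j * (h X0 - h a) by rewrite -Hi -Hj; lra.
  rewrite ler_pM2r //; lra.
pose L := lim ((g x - g a) / (h x - h a) @[x --> a^'+]).
pose rho k := (g (P k) - g a) / (h (P k) - h a).
apply: (@discrete R rho r (`|L| + 1) M M0 r0 rM); last first.
  move=> n; have [h1 [h2 _]] := PI n.
  have hh : `|L - rho n| < 1 by apply: Hd2; rewrite h1 /=; exact: le_lt_trans h2 X0d2.
  rewrite ltr_norml in hh; rewrite ler_norml.
  have := ler_norm L; have := ler_norm (- L); rewrite normrN.
  move: hh => /andP[hh1 hh2] n1 n2; apply/andP; split; lra.
move=> i j /andP[ij jiM].
have tw : P j.+1 < P j := Pdec j j.+1 (ltnSn j).
have wX : P j < P i := Pdec i j ij.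
have [ai [iX0 Hi]] := PI i.
have [aj [jX0 Hj]] := PI j.
have [aj1 [j1X0 Hj1]] := PI j.+1.
have HXpos : 0 < h (P i) - h a := Hpos _ ai (le_lt_trans iX0 X0b).
have Hwpos : 0 < h (P j) - h a := Hpos _ aj (le_lt_trans jX0 X0b).
have Htpos : 0 < h (P j.+1) - h a := Hpos _ aj1 (le_lt_trans j1X0 X0b).
have iB : P i < b := le_lt_trans iX0 X0b.
have cont : {within `[P j.+1, P i], continuous (auxF a h g (P i))}.
  apply: (@continuous_subspaceW _ _ _ `[a, b[).
    move=> x /=; rewrite !in_itv /= => /andP[h1 h2].
    by rewrite (ltW (lt_le_trans aj1 h1)) (le_lt_trans h2 iB).
  by rewrite /auxF => x; apply: cvgB; apply: cvgMr; [exact: hc|exact: gc].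
have Ds : forall s, P j.+1 < s < P i -> `[a, b[%classic s.
  by move=> s /andP[h1 h2] /=; rewrite in_itv /= (ltW (lt_trans aj1 h1)) (lt_trans h2 iB).
have noext : forall c, P j.+1 < c < P i -> ~ local_extremum `[a, b[ (auxF a h g (P i)) c.
  move=> c /andP[tc cX] ext.
  pose S := [set tau | a < tau <= P i /\ local_extremum `[a, b[ (auxF a h g (P i)) tau].
  have Sc : S c by split => //; rewrite (lt_trans aj1 tc) (ltW cX).
  have ubX : ubound S (P i) by move=> z [/andP[_ ->]].
  have hsS : has_sup S by split; [exists c | exists (P i)].
  have cmu : c <= mu a b h g (P i) := sup_upper_bound hsS Sc.
  have muX : mu a b h g (P i) <= P i := ge_sup (ex_intro _ c Sc) ubX.
  have cab : c \in `[a, b[ by apply: inab; [exact: ltW (lt_trans aj1 tc) | exact: lt_trans cX iB].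
  have muab : mu a b h g (P i) \in `[a, b[.
    by apply: inab; [exact: le_trans (ltW (lt_trans aj1 tc)) cmu | exact: le_lt_trans muX iB].
  have hcm : h c <= h (mu a b h g (P i)) := hmon _ _ cab muab cmu.
  have htc : h (P j.+1) <= h c := hmon _ _ (Pab j.+1) cab (ltW tc).
  have Vi : V (P i) by apply: Hd1; rewrite ai /=; exact: le_lt_trans iX0 X0d1.
  have rat := qV _ Vi.
  rewrite ltr_pdivrMr // in rat.
  have rexp : q * r ^+ i <= r ^+ j.+1.
    have ij1 : (i <= j.+1)%N by apply: leq_trans (ltnW ij) (leqnSn j).
    have -> : j.+1 = (i + (j.+1 - i))%N by rewrite subnKC.
    rewrite exprD mulrC; apply: ler_wpM2l; first by rewrite exprn_ge0 // ltW.
    apply: (le_trans qM); apply: ler_wiXn2l; [exact: ltW|exact: ltW| by rewrite leq_subLR addnS ltnS].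
  have : q * (h (P i) - h a) <= h (P j.+1) - h a.
    by rewrite Hj1 Hi mulrA; apply: ler_wpM2r => //; exact: ltW.
  move=> hq.
  have h1 : h (P j.+1) - h a <= h (mu a b h g (P i)) - h a by rewrite lerD2r (le_trans htc hcm).
  by have := lt_le_trans (le_lt_trans h1 rat) hq; rewrite ltxx.
have twX : P j.+1 < P j < P i by rewrite tw wX.
have bt := @between_noext R `[a, b[ (auxF a h g (P i)) (P j.+1) (P i) (P j) twX cont Ds noext.
rewrite (auxF_diff g (lt0r_neq0 HXpos) (lt0r_neq0 Htpos)) in bt.
rewrite (auxF_diff g (lt0r_neq0 HXpos) (lt0r_neq0 Hwpos)) in bt.
have Htr : h (P j.+1) - h a = r * (h (P j) - h a) by rewrite Hj1 Hj exprS mulrA.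
have c0 : 0 < (h (P i) - h a) * (h (P j) - h a) by rewrite mulr_gt0.
apply: (Btw_scale c0).
have E1 : (h (P i) - h a) * (h (P j.+1) - h a) * (rho i - rho j.+1) =
  ((h (P i) - h a) * (h (P j) - h a)) * (r * (rho i - rho j.+1)) by rewrite Htr; ring.
rewrite -E1; exact: bt.
Qed.
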